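(* Assume $f_0,f_1\in \mathrm{PL}_0(\mathbf{I})$ generate a standard isomorphic copy of $F$. Let $(a,c)$ be an orbital of $f_0$ and let $(b_1,d_1),\dots,(b_n,d_n)$ be the orbitals of $f_1$ contained in $(a,c)$, in increasing order. If $(a,c)$ is an up-bump of $f_0$ and $r$ is the minimal number in $(a,c)$ with $rf_0=rf_1$, then $b_1f_0\ge r$. If $(a,c)$ is a down-bump of $f_0$ and $r$ is the maximal number in $(a,c)$ with $rf_0=rf_1$, then $d_nf_0\le r$.
   Context: $\mathrm{PL}_0(\mathbf{I})$ is the group of orientation-preserving piecewise-linear homeomorphisms of $[0,1]$ with finitely many points of non-differentiability; functions act on the right ($tf=f(t)$). The orbitals of $f$ are the connected components (open intervals) of $\operatorname{Supp}(f)=\{x: xf\ne x\}$; an orbital $A$ is an up-bump (resp. down-bump) if $xf>x$ (resp. $xf<x$) for all $x\in A$. Thompson's group $F=\langle x_0,x_1\mid [x_0x_1^{-1},x_1^{x_0}]=[x_0x_1^{-1},x_1^{x_0^2}]=1\rangle$, with $a^b=b^{-1}ab$, $[a,b]=aba^{-1}b^{-1}$; $f_0,f_1$ generate a standard isomorphic copy of $F$ if $\langle f_0,f_1\rangle\cong F$ via an isomorphism with $x_0\mapsto f_0$, $x_1\mapsto f_1$. *)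

(* Defs.v *)
From Stdlib Require Import Reals Lra List Relations.
Import ListNotations.
Open Scope R_scope.

(** PL_0(I): orientation-preserving piecewise-linear homeomorphisms of [0,1]
    with finitely many breakpoints.  Only the values on [0,1] matter. *)
Definition PL0 (f : R -> R) : Prop :=
  f 0 = 0 /\ f 1 = 1 /\
  (forall x y, 0 <= x -> x < y -> y <= 1 -> f x < f y) /\
  exists (k : nat) (p : nat -> R),
    p 0%nat = 0 /\ p k = 1 /\
    (forall i, (i < k)%nat -> p i < p (S i)) /\
    (forall i, (i < k)%nat -> exists alpha beta : R,
        forall x, p i <= x <= p (S i) -> f x = alpha * x + beta).

Definition inverse_on_I (f g : R -> R) : Prop :=
  forall t, 0 <= t <= 1 -> g (f t) = t /\ f (g t) = t.

(** Orbitals: (a,c) is a component of Supp(f) = {x in [0,1] | xf <> x}. *)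
Definition orbital (f : R -> R) (a c : R) : Prop :=
  0 <= a /\ a < c /\ c <= 1 /\ f a = a /\ f c = c /\
  (forall x, a < x < c -> f x <> x).

Definition up_bump (f : R -> R) (a c : R) : Prop :=
  orbital f a c /\ forall x, a < x < c -> f x > x.

Definition down_bump (f : R -> R) (a c : R) : Prop :=
  orbital f a c /\ forall x, a < x < c -> f x < x.

(** Words in the generators x0 (false), x1 (true); the second component is
    the sign (true = positive exponent, false = inverse). *)
Definition letter := (bool * bool)%type.
Definition word := list letter.

Definition linv (l : letter) : letter := (fst l, negb (snd l)).
Definition winv (w : word) : word := rev (map linv w).

Definition X0 : word := [(false, true)].
Definition X1 : word := [(true, true)].
Definition X0i : word := [(false, false)].
Definition X1i : word := [(true, false)].

Definition wconj (a b : word) : word := winv b ++ a ++ b.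
Definition wcomm (a b : word) : word := a ++ b ++ winv a ++ winv b.

Definition relator1 : word := wcomm (X0 ++ X1i) (wconj X1 X0).
Definition relator2 : word := wcomm (X0 ++ X1i) (wconj X1 (X0 ++ X0)).

Inductive Fstep : word -> word -> Prop :=
| Fstep_free : forall p q l, Fstep (p ++ q) (p ++ [l; linv l] ++ q)
| Fstep_rel1 : forall p q, Fstep (p ++ q) (p ++ relator1 ++ q)
| Fstep_rel2 : forall p q, Fstep (p ++ q) (p ++ relator2 ++ q).

(** Equality in F = < x0, x1 | relator1, relator2 >. *)
Definition Fequiv : word -> word -> Prop := clos_refl_sym_trans word Fstep.

(** Right action: t (g1 g2 ... gk) = gk (... (g1 t)). *)
Definition eval_letter (f0 g0 f1 g1 : R -> R) (l : letter) : R -> R :=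
  match l with
  | (false, true) => f0
  | (false, false) => g0
  | (true, true) => f1
  | (true, false) => g1
  end.

Definition eval_word (f0 g0 f1 g1 : R -> R) (w : word) (t : R) : R :=
  fold_left (fun s l => eval_letter f0 g0 f1 g1 l s) w t.

(** f0, f1 (with inverses g0, g1) generate a standard isomorphic copy of F:
    x0 |-> f0, x1 |-> f1 induces a well-defined injective homomorphism. *)
Definition standard_F_copy (f0 g0 f1 g1 : R -> R) : Prop :=
  forall w1 w2 : word,
    Fequiv w1 w2 <->
    (forall t, 0 <= t <= 1 -> eval_word f0 g0 f1 g1 w1 t = eval_word f0 g0 f1 g1 w2 t).

(* Main.v *)
Require Import Defs.
From Stdlib Require Import Reals Lra Lia List Relations.
Import ListNotations.
Open Scope R_scope.

Definition I01 (t : R) : Prop := 0 <= t <= 1.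

Definition WC (f : R -> R) : Prop :=
  forall t, I01 t -> forall eps, eps > 0 -> exists del, del > 0 /\
    forall y, I01 y -> Rabs (y - t) < del -> Rabs (f y - f t) < eps.

Definition clamp (t : R) : R := Rmax 0 (Rmin 1 t).

Lemma clamp_I t : I01 (clamp t).
Proof. unfold I01, clamp, Rmax, Rmin; repeat destruct Rle_dec; lra. Qed.

Lemma clamp_id t : I01 t -> clamp t = t.
Proof. unfold I01, clamp, Rmax, Rmin; repeat destruct Rle_dec; lra. Qed.

Lemma clamp_lip y t : Rabs (clamp y - clamp t) <= Rabs (y - t).
Proof.
  unfold clamp, Rmax, Rmin; repeat destruct Rle_dec;
  unfold Rabs; repeat destruct Rcase_abs; lra.
Qed.

Lemma WC_cont f : WC f -> continuity (fun t => f (clamp t)).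
Proof.
  intros H x. unfold continuity_pt, continue_in, limit1_in, limit_in. simpl. unfold R_dist.
  intros eps Heps. destruct (H (clamp x) (clamp_I x) eps Heps) as [del [Hd Hy]].
  exists del. split; [exact Hd|]. intros y [_ Hyx].
  apply Hy. apply clamp_I. pose proof (clamp_lip y x). lra.
Qed.

Lemma piece_right (p : nat -> R) (k : nat) :
  p 0%nat = 0 -> p k = 1 -> (forall i, (i < k)%nat -> p i < p (S i)) ->
  forall t, 0 <= t < 1 -> exists i, (i < k)%nat /\ p i <= t < p (S i).
Proof.
  intros H0 Hk Hinc t Ht.
  assert (G : forall n, (n <= k)%nat -> t < p n -> exists i, (i < n)%nat /\ p i <= t < p (S i)).
  { induction n; intros Hn Htn.
    - lra.
    - destruct (Rlt_dec t (p n)) as [Hl|Hl].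
      + destruct (IHn ltac:(lia) Hl) as [i [Hi1 Hi2]]. exists i. split; [lia|exact Hi2].
      + exists n. split; [lia|lra]. }
  destruct (G k (le_n k) ltac:(lra)) as [i Hi]. exists i. exact Hi.
Qed.

Lemma piece_left (p : nat -> R) (k : nat) :
  p 0%nat = 0 -> p k = 1 -> (forall i, (i < k)%nat -> p i < p (S i)) ->
  forall t, 0 < t <= 1 -> exists i, (i < k)%nat /\ p i < t <= p (S i).
Proof.
  intros H0 Hk Hinc t Ht.
  assert (G : forall n, (n <= k)%nat -> t <= p n -> exists i, (i < n)%nat /\ p i < t <= p (S i)).
  { induction n; intros Hn Htn.
    - lra.
    - destruct (Rle_dec t (p n)) as [Hl|Hl].
      + destruct (IHn ltac:(lia) Hl) as [i [Hi1 Hi2]]. exists i. split; [lia|exact Hi2].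
      + exists n. split; [lia|lra]. }
  destruct (G k (le_n k) ltac:(lra)) as [i Hi]. exists i. exact Hi.
Qed.

Lemma affine_small (al eps : R) : eps > 0 -> exists d, d > 0 /\
  forall z, Rabs z < d -> Rabs (al * z) < eps.
Proof.
  intros He. exists (eps / (Rabs al + 1)). split.
  - apply Rdiv_lt_0_compat; [lra| pose proof (Rabs_pos al); lra].
  - intros z Hz. rewrite Rabs_mult.
    pose proof (Rabs_pos al). pose proof (Rabs_pos z).
    assert (E : eps / (Rabs al + 1) * (Rabs al + 1) = eps) by (field; lra).
    assert (Rabs al * Rabs z <= Rabs al * (eps / (Rabs al + 1))) by (apply Rmult_le_compat_l; lra).
    assert (eps / (Rabs al + 1) > 0) by (apply Rdiv_lt_0_compat; lra).
    nra.
Qed.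

Lemma PL0_WC f : PL0 f -> WC f.
Proof.
  intros (Hf0 & Hf1 & Hmon & k & p & Hp0 & Hpk & Hinc & Hlin).
  intros t Ht eps Heps.
  assert (R: exists dR, dR > 0 /\ forall y, I01 y -> t <= y -> y < t + dR -> Rabs (f y - f t) < eps).
  { destruct (Rlt_dec t 1) as [Hlt|Hge].
    - destruct (piece_right p k Hp0 Hpk Hinc t ltac:(unfold I01 in Ht; lra)) as [i [Hi Hti]].
      destruct (Hlin i Hi) as [al [be Hab]].
      destruct (affine_small al eps Heps) as [d [Hd Hz]].
      exists (Rmin d (p (S i) - t)). split.
      + apply Rmin_pos; lra.
      + intros y Hy Hty Hyd.
        pose proof (Rmin_l d (p (S i) - t)). pose proof (Rmin_r d (p (S i) - t)).
        rewrite (Hab y) by lra. rewrite (Hab t) by lra.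
        replace (al * y + be - (al * t + be)) with (al * (y - t)) by ring.
        apply Hz. rewrite Rabs_right; lra.
    - exists 1. split; [lra|]. intros y Hy Hty _. unfold I01 in *.
      replace y with t by lra. rewrite Rminus_diag, Rabs_R0. lra. }
  assert (L: exists dL, dL > 0 /\ forall y, I01 y -> y <= t -> t - dL < y -> Rabs (f y - f t) < eps).
  { destruct (Rlt_dec 0 t) as [Hlt|Hge].
    - destruct (piece_left p k Hp0 Hpk Hinc t ltac:(unfold I01 in Ht; lra)) as [i [Hi Hti]].
      destruct (Hlin i Hi) as [al [be Hab]].
      destruct (affine_small al eps Heps) as [d [Hd Hz]].
      exists (Rmin d (t - p i)). split.
      + apply Rmin_pos; lra.
      + intros y Hy Hty Hyd.
        pose proof (Rmin_l d (t - p i)). pose proof (Rmin_r d (t - p i)).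
        rewrite (Hab y) by lra. rewrite (Hab t) by lra.
        replace (al * y + be - (al * t + be)) with (al * (y - t)) by ring.
        apply Hz. rewrite Rabs_left1; lra.
    - exists 1. split; [lra|]. intros y Hy Hty _. unfold I01 in *.
      replace y with t by lra. rewrite Rminus_diag, Rabs_R0. lra. }
  destruct R as [dR [HdR HR]]. destruct L as [dL [HdL HL]].
  exists (Rmin dR dL). split; [apply Rmin_pos; lra|].
  intros y Hy Hyt. pose proof (Rmin_l dR dL). pose proof (Rmin_r dR dL).
  destruct (Rle_dec t y).
  - apply HR; auto. rewrite Rabs_right in Hyt; lra.
  - apply HL; auto; [lra|]. rewrite Rabs_left in Hyt; lra.
Qed.

Definition Good (f g : R -> R) : Prop :=
  f 0 = 0 /\ f 1 = 1 /\ (forall x y, 0 <= x -> x < y -> y <= 1 -> f x < f y) /\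
  inverse_on_I f g /\ WC f.

Definition Bij (H Hi : R -> R) : Prop :=
  (forall t, I01 t -> I01 (H t)) /\ (forall t, I01 t -> I01 (Hi t)) /\
  (forall t, I01 t -> H (Hi t) = t) /\ (forall t, I01 t -> Hi (H t) = t) /\
  (forall x y, I01 x -> I01 y -> x < y -> H x < H y).

Lemma Bij_lt H Hi : Bij H Hi -> forall x y, I01 x -> I01 y -> x < y -> H x < H y.
Proof. intros (_&_&_&_&B) ; exact B. Qed.
Lemma Bij_map H Hi : Bij H Hi -> forall t, I01 t -> I01 (H t).
Proof. intros (B&_) ; exact B. Qed.
Lemma Bij_imap H Hi : Bij H Hi -> forall t, I01 t -> I01 (Hi t).
Proof. intros (_&B&_) ; exact B. Qed.
Lemma Bij_HHi H Hi : Bij H Hi -> forall t, I01 t -> H (Hi t) = t.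
Proof. intros (_&_&B&_) ; exact B. Qed.
Lemma Bij_HiH H Hi : Bij H Hi -> forall t, I01 t -> Hi (H t) = t.
Proof. intros (_&_&_&B&_) ; exact B. Qed.
Lemma Bij_le H Hi : Bij H Hi -> forall x y, I01 x -> I01 y -> x <= y -> H x <= H y.
Proof. intros B x y Hx Hy Hxy. destruct (Req_dec x y); [subst; lra|].
  left; apply (Bij_lt H Hi B); auto; lra. Qed.
Lemma Bij_lt_rev H Hi : Bij H Hi -> forall x y, I01 x -> I01 y -> H x < H y -> x < y.
Proof. intros B x y Hx Hy Hxy. destruct (Rlt_dec x y); auto.
  assert (H y <= H x) by (apply (Bij_le H Hi B); auto; lra). lra. Qed.
Lemma Bij_inj H Hi : Bij H Hi -> forall x y, I01 x -> I01 y -> H x = H y -> x = y.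
Proof. intros B x y Hx Hy Hxy. destruct (Rtotal_order x y) as [h|[h|h]]; auto.
  - pose proof (Bij_lt H Hi B x y Hx Hy h); lra.
  - pose proof (Bij_lt H Hi B y x Hy Hx h); lra. Qed.
Lemma Bij_inv H Hi : Bij H Hi -> Bij Hi H.
Proof. intros B. pose proof B as (B1&B2&B3&B4&B5). split; [|split;[|split;[|split]]]; auto.
  intros x y Hx Hy Hxy. apply (Bij_lt_rev H Hi B); auto. rewrite !B3; auto. Qed.
Lemma Bij_comp H Hi K Ki : Bij H Hi -> Bij K Ki -> Bij (fun t => K (H t)) (fun t => Hi (Ki t)).
Proof. intros (A1&A2&A3&A4&A5) (B1&B2&B3&B4&B5).
  split; [|split;[|split;[|split]]]; intros; auto.
  - rewrite A3; auto.
  - rewrite B4; auto.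
Qed.

Lemma Good_map f g : Good f g -> forall t, I01 t -> I01 (f t).
Proof. intros (F0&F1&M&_) t Ht. unfold I01 in *.
  destruct (Req_dec t 0); [subst; lra|]. destruct (Req_dec t 1); [subst; lra|].
  pose proof (M 0 t ltac:(lra) ltac:(lra) ltac:(lra)). pose proof (M t 1 ltac:(lra) ltac:(lra) ltac:(lra)). lra. Qed.

Lemma Good_surj f g : Good f g -> forall t, I01 t -> exists s, I01 s /\ f s = t.
Proof. intros G t Ht. pose proof G as (F0&F1&M&Inv&W).
  destruct (Req_dec t 0). { exists 0. split; [unfold I01; lra| congruence]. }
  destruct (Req_dec t 1). { exists 1. split; [unfold I01; lra| congruence]. }
  pose proof (WC_cont f W) as C.
  destruct (IVT (fun x => f (clamp x) - t) 0 1) as [z [Hz Ez]].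
  - apply continuity_minus; [exact C| apply continuity_const; intros ??; reflexivity].
  - lra.
  - rewrite clamp_id by (unfold I01; lra). unfold I01 in Ht; lra.
  - rewrite clamp_id by (unfold I01; lra). unfold I01 in Ht; lra.
  - exists z. rewrite clamp_id in Ez by exact Hz. split; [exact Hz| lra].
Qed.

Lemma Good_Bij f g : Good f g -> Bij f g.
Proof. intros G. pose proof G as (F0&F1&M&Inv&W).
  assert (gm : forall t, I01 t -> I01 (g t)).
  { intros t Ht. destruct (Good_surj f g G t Ht) as [s [Hs Es]]. subst t.
    rewrite (proj1 (Inv s Hs)). exact Hs. }
  split; [|split;[|split;[|split]]].
  - apply (Good_map f g G).
  - exact gm.
  - intros t Ht; apply (Inv t Ht).
  - intros t Ht; apply (Inv t Ht).
  - intros x y Hx Hy Hxy; apply M; unfold I01 in *; lra.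
Qed.

Lemma fix_of_lim F u l : continuity F -> Un_cv u l -> (forall n, F (u n) = u (S n)) -> F l = l.
Proof. intros C Hu E. pose proof (continuity_seq F u l (C l) Hu) as H1.
  pose proof (CV_shift' u 1 l Hu) as H2.
  apply (UL_sequence (fun n => u (n + 1)%nat)); auto.
  intros eps He. destruct (H1 eps He) as [N HN]. exists N. intros n Hn.
  rewrite Nat.add_1_r, <- E. apply HN; auto. Qed.

Lemma fix_of_lim_back F u l : continuity F -> Un_cv u l -> (forall n, F (u (S n)) = u n) -> F l = l.
Proof. intros C Hu E. pose proof (CV_shift' u 1 l Hu) as H2.
  pose proof (continuity_seq F _ l (C l) H2) as H1.
  apply (UL_sequence u); auto.
  intros eps He. destruct (H1 eps He) as [N HN]. exists N. intros n Hn.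
  rewrite <- E, <- Nat.add_1_r. apply HN; auto. Qed.

Lemma OC_up f g : Good f g -> forall x, 0 < x < 1 -> f x > x ->
  exists b d, orbital f b d /\ b < x < d.
Proof.
  intros G x Hx Hfx. pose proof G as (F0&F1&M&Inv&W).
  pose proof (Good_Bij f g G) as B. pose proof (Bij_inv f g B) as Bg.
  pose proof (WC_cont f W) as C.
  set (u := fun n => Nat.iter n f x). set (w := fun n => Nat.iter n g x).
  assert (uI : forall n, I01 (u n)).
  { induction n; simpl; [unfold I01; lra| apply (Bij_map f g B); exact IHn]. }
  assert (wI : forall n, I01 (w n)).
  { induction n; simpl; [unfold I01; lra| apply (Bij_map g f Bg); exact IHn]. }
  assert (xI : I01 x) by (unfold I01; lra).
  assert (gx : g x < x).
  { apply (Bij_lt_rev f g B); auto. apply (Bij_map g f Bg); auto. rewrite (Bij_HHi f g B); auto. }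
  assert (uinc : forall n, u n < u (S n)).
  { induction n. simpl. lra. change (f (u n) < f (u (S n))). apply (Bij_lt f g B); auto. }
  assert (wdec : forall n, w (S n) < w n).
  { induction n. simpl. lra. change (g (w (S n)) < g (w n)). apply (Bij_lt g f Bg); auto. }
  destruct (growing_cv u) as [d Hd].
  { intros n; left; apply uinc. }
  { exists 1. intros z [n ->]. apply (uI n). }
  destruct (decreasing_cv w) as [b Hb].
  { intros n; left; apply wdec. }
  { exists 0. intros z [n ->]. unfold opp_seq. pose proof (wI n). unfold I01 in *; lra. }
  assert (ud : forall n, u n <= d) by (apply growing_ineq; auto; intros n; left; apply uinc).
  assert (wb : forall n, b <= w n) by (apply decreasing_ineq; auto; intros n; left; apply wdec).
  assert (d1 : d <= 1).
  { apply (@Rle_cv_lim u (fun _ => 1)); auto. intros n; apply uI. intros e He; exists 0%nat; intros; unfold R_dist; rewrite Rminus_diag, Rabs_R0; lra. }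
  assert (b0 : 0 <= b).
  { apply (@Rle_cv_lim (fun _ => 0) w); auto. intros n; apply wI. intros e He; exists 0%nat; intros; unfold R_dist; rewrite Rminus_diag, Rabs_R0; lra. }
  assert (xd : x < d) by (pose proof (ud 1%nat); pose proof (uinc 0%nat); simpl in *; lra).
  assert (bx : b < x) by (pose proof (wb 1%nat); pose proof (wdec 0%nat); simpl in *; lra).
  assert (Fd : f d = d).
  { assert (E := fix_of_lim _ u d C Hd). cbv beta in E. rewrite clamp_id in E by (unfold I01; lra). apply E.
    intros n. rewrite clamp_id by apply uI. reflexivity. }
  assert (Fb : f b = b).
  { assert (E := fix_of_lim_back _ w b C Hb). cbv beta in E. rewrite clamp_id in E by (unfold I01; lra). apply E.
    intros n. rewrite clamp_id by apply wI. simpl. apply (Bij_HHi f g B). apply wI. }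
  exists b, d. split; [|lra].
  split; [lra|split;[lra|split;[lra|split;[exact Fb|split;[exact Fd|]]]]].
  intros t Ht Eft. assert (tI : I01 t) by (unfold I01; lra).
  destruct (Rtotal_order t x) as [h|[h|h]].
  - assert (forall n, t < w n).
    { induction n. simpl; lra. change (t < g (w n)).
      rewrite <- (Bij_HiH f g B t tI), Eft. apply (Bij_lt g f Bg); auto. }
    assert (t <= b).
    { apply (@Rle_cv_lim (fun _ => t) w); auto. intros n; left; auto.
      intros e He; exists 0%nat; intros; unfold R_dist; rewrite Rminus_diag, Rabs_R0; lra. }
    lra.
  - subst; lra.
  - assert (forall n, u n < t).
    { induction n. simpl; lra. change (f (u n) < t). rewrite <- Eft. apply (Bij_lt f g B); auto. }
    assert (d <= t).
    { apply (@Rle_cv_lim u (fun _ => t)); auto. intros n; left; auto.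
      intros e He; exists 0%nat; intros; unfold R_dist; rewrite Rminus_diag, Rabs_R0; lra. }
    lra.
Qed.

Definition mir (f : R -> R) : R -> R := fun t => 1 - f (1 - t).

Lemma Rm11 x : 1 - (1 - x) = x.
Proof. ring. Qed.

Lemma Good_mir f g : Good f g -> Good (mir f) (mir g).
Proof.
  intros (F0&F1&M&Inv&W). unfold mir. split; [|split;[|split;[|split]]].
  - rewrite Rminus_0_r, F1; ring.
  - rewrite Rminus_diag, F0; ring.
  - intros x y Hx Hxy Hy. pose proof (M (1-y) (1-x) ltac:(lra) ltac:(lra) ltac:(lra)). lra.
  - intros t Ht. rewrite !Rm11. destruct (Inv (1-t) ltac:(lra)) as [A B]. rewrite A, B. split; ring.
  - intros t Ht eps He. destruct (W (1-t) ltac:(unfold I01 in *; lra) eps He) as [d [Hd Hy]].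
    exists d. split; auto. intros y Hy1 Hyt.
    replace (1 - f (1 - y) - (1 - f (1 - t))) with (- (f (1-y) - f (1-t))) by ring.
    rewrite Rabs_Ropp. apply Hy. unfold I01 in *; lra.
    replace (1 - y - (1 - t)) with (- (y - t)) by ring. rewrite Rabs_Ropp; auto.
Qed.

Lemma orb_mir f b d : orbital f b d -> orbital (mir f) (1 - d) (1 - b).
Proof. unfold mir. intros (H1&H2&H3&H4&H5&H6).
  split;[lra|split;[lra|split;[lra|split;[|split;[|]]]]].
  - rewrite Rm11, H5; ring.
  - rewrite Rm11, H4; ring.
  - intros x Hx E. apply (H6 (1 - x)); [lra|]. lra.
Qed.

Lemma orb_mir_inv f b d : orbital (mir f) b d -> orbital f (1 - d) (1 - b).
Proof. unfold mir. intros (H1&H2&H3&H4&H5&H6).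
  split;[lra|split;[lra|split;[lra|split;[|split;[|]]]]].
  - lra.
  - lra.
  - intros x Hx E. apply (H6 (1 - x)); [lra|]. rewrite Rm11, E. ring.
Qed.

Lemma OC f g : Good f g -> forall x, 0 < x < 1 -> f x <> x ->
  exists b d, orbital f b d /\ b < x < d.
Proof.
  intros G x Hx Hne. destruct (Rtotal_order (f x) x) as [h|[h|h]].
  - destruct (OC_up (mir f) (mir g) (Good_mir f g G) (1 - x) ltac:(lra)) as [b [d [O Hbd]]].
    { unfold mir. rewrite Rm11. lra. }
    exists (1 - d), (1 - b). split; [apply orb_mir_inv; exact O| lra].
  - contradiction.
  - apply (OC_up f g G x Hx h).
Qed.

Definition leqb (a b : letter) : bool :=
  andb (Bool.eqb (fst a) (fst b)) (Bool.eqb (snd a) (snd b)).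

Lemma leqb_ok a b : leqb a b = true -> a = b.
Proof. destruct a as [[] []], b as [[] []]; vm_compute; intros HH; first [reflexivity | discriminate HH]. Qed.

Fixpoint red (w : word) : word :=
  match w with
  | x :: ((y :: r) as t) => if leqb y (linv x) then r else x :: red t
  | _ => w
  end.

Lemma Fstep_cons x w1 w2 : Fstep w1 w2 -> Fstep (x :: w1) (x :: w2).
Proof. intros H; destruct H.
  - exact (Fstep_free (x :: p) q l).
  - exact (Fstep_rel1 (x :: p) q).
  - exact (Fstep_rel2 (x :: p) q).
Qed.

Lemma Fequiv_cons x w1 w2 : Fequiv w1 w2 -> Fequiv (x :: w1) (x :: w2).
Proof. intros H; induction H.
  - apply rst_step, Fstep_cons; auto.
  - apply rst_refl.
  - apply rst_sym; auto.
  - eapply rst_trans; eauto.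
Qed.

Lemma red_ok w : Fequiv w (red w).
Proof. induction w as [|x t IH].
  - apply rst_refl.
  - destruct t as [|y r].
    + apply rst_refl.
    + simpl. destruct (leqb y (linv x)) eqn:E.
      * apply leqb_ok in E. subst y. apply rst_sym, rst_step. exact (Fstep_free [] r x).
      * apply Fequiv_cons. exact IH.
Qed.

Lemma red_iter n w : Fequiv w (Nat.iter n red w).
Proof. induction n; simpl. apply rst_refl. eapply rst_trans; [exact IHn| apply red_ok]. Qed.

Definition x0 : letter := (false, true).
Definition x0i : letter := (false, false).
Definition x1 : letter := (true, true).
Definition x1i : letter := (true, false).

Lemma F_rel1 : Fequiv [x0i; x1; x0; x0; x1i] [x0; x1i; x0i; x1; x0].
Proof.
  eapply rst_trans.
  - apply rst_step. exact (Fstep_rel1 [] [x0i; x1; x0; x0; x1i]).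
  - assert (E := red_iter 6 (relator1 ++ [x0i; x1; x0; x0; x1i])). vm_compute in E. exact E.
Qed.

Lemma F_rel2 : Fequiv [x0i; x0i; x1; x0; x0; x0; x1i] [x0; x1i; x0i; x0i; x1; x0; x0].
Proof.
  eapply rst_trans.
  - apply rst_step. exact (Fstep_rel2 [] [x0i; x0i; x1; x0; x0; x0; x1i]).
  - assert (E := red_iter 7 (relator2 ++ [x0i; x0i; x1; x0; x0; x0; x1i])). vm_compute in E. exact E.
Qed.

Lemma cf1 H Hi K Ki : Bij H Hi -> Bij K Ki -> (forall t, I01 t -> K (H t) = H (K t)) ->
  forall y, I01 y -> K y = y -> K (H y) = H y.
Proof. intros BH BK C y Hy E. rewrite C, E; auto. Qed.

Lemma cf2 H Hi K Ki : Bij H Hi -> Bij K Ki -> (forall t, I01 t -> K (H t) = H (K t)) ->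
  forall y, I01 y -> K y = y -> K (Hi y) = Hi y.
Proof. intros BH BK C y Hy E.
  assert (zI : I01 (Hi y)) by (apply (Bij_imap H Hi BH); auto).
  apply (Bij_inj H Hi BH); auto. apply (Bij_map K Ki BK); auto.
  rewrite <- C by auto. rewrite (Bij_HHi H Hi BH y Hy). auto. Qed.

Lemma fix_r H Hi K Ki a r : Bij H Hi -> Bij K Ki -> (forall t, I01 t -> K (H t) = H (K t)) ->
  I01 a -> I01 r -> a < r -> H r = r -> K a = a -> (forall s, a < s < r -> H s <> s) -> K r = r.
Proof. intros BH BK C Ia Ir Har Hr Ka Nf.
  assert (C' : forall t, I01 t -> H (K t) = K (H t)) by (intros; symmetry; auto).
  assert (E1 : H (K r) = K r) by (apply (cf1 K Ki H Hi); auto).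
  assert (E2 : H (Ki r) = Ki r) by (apply (cf2 K Ki H Hi); auto).
  assert (Kia : Ki a = a) by (rewrite <- Ka at 1; apply (Bij_HiH K Ki BK); auto).
  assert (A1 : K a < K r) by (apply (Bij_lt K Ki BK); auto).
  assert (A2 : Ki a < Ki r) by (apply (Bij_lt Ki K (Bij_inv K Ki BK)); auto).
  assert (G1 : r <= K r).
  { destruct (Rlt_dec (K r) r); [|lra]. exfalso. apply (Nf (K r)); [lra|auto]. }
  assert (G2 : r <= Ki r).
  { destruct (Rlt_dec (Ki r) r); [|lra]. exfalso. apply (Nf (Ki r)); [lra|auto]. }
  assert (K r <= K (Ki r)) by (apply (Bij_le K Ki BK); auto; apply (Bij_imap K Ki BK); auto).
  rewrite (Bij_HHi K Ki BK r Ir) in H0. lra.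
Qed.

Lemma core_up f0 g0 f1 g1 :
  Good f0 g0 -> Good f1 g1 ->
  (forall t, I01 t -> f0 (f1 (g0 (g1 (f0 t)))) = g1 (f0 (f0 (f1 (g0 t))))) ->
  (forall t, I01 t -> f0 (f0 (f1 (g0 (g0 (g1 (f0 t)))))) = g1 (f0 (f0 (f0 (f1 (g0 (g0 t))))))) ->
  forall a c, orbital f0 a c -> (forall x, a < x < c -> f0 x > x) ->
  forall b1 d1 r, orbital f1 b1 d1 -> a <= b1 -> d1 <= c ->
   (forall b d, orbital f1 b d -> a <= b -> d <= c -> b1 <= b) ->
   a < r < c -> f0 r = f1 r -> (forall s, a < s < c -> f0 s = f1 s -> r <= s) ->
   f0 b1 >= r.
Proof.
  intros G0 G1 C1 C2 a c Oac Up b1 d1 r O1 Hab Hdc Left Hr Efr Min.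
  pose proof Oac as (Ha0 & Hac & Hc1 & Fa & Fc & _).
  pose proof O1 as (Hb0 & Hbd & Hd1 & Fb & Fd & Mv).
  apply Rnot_lt_ge; intro HB.
  pose proof (Good_Bij f0 g0 G0) as BF0. pose proof (Bij_inv _ _ BF0) as BG0.
  pose proof (Good_Bij f1 g1 G1) as BF1. pose proof (Bij_inv _ _ BF1) as BG1.
  set (h := fun t => g1 (f0 t)). set (hi := fun t => g0 (f1 t)).
  set (k := fun t => f0 (f1 (g0 t))). set (ki := fun t => f0 (g1 (g0 t))).
  set (k2 := fun t => f0 (f0 (f1 (g0 (g0 t))))). set (k2i := fun t => f0 (f0 (g1 (g0 (g0 t))))).
  assert (BH : Bij h hi) by (apply (Bij_comp f0 g0 g1 f1); auto).
  assert (BK : Bij k ki).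
  { apply (Bij_comp g0 f0 (fun t => f0 (f1 t)) (fun t => g1 (g0 t))); auto.
    apply (Bij_comp f1 g1 f0 g0); auto. }
  assert (BK2 : Bij k2 k2i).
  { apply (Bij_comp g0 f0 (fun t => f0 (f0 (f1 (g0 t)))) (fun t => f0 (g1 (g0 (g0 t))))); auto.
    apply (Bij_comp g0 f0 (fun t => f0 (f0 (f1 t))) (fun t => g1 (g0 (g0 t)))); auto.
    apply (Bij_comp f1 g1 (fun t => f0 (f0 t)) (fun t => g0 (g0 t))); auto.
    apply (Bij_comp f0 g0 f0 g0); auto. }
  assert (CK : forall t, I01 t -> k (h t) = h (k t)) by (intros; apply C1; auto).
  assert (CK2 : forall t, I01 t -> k2 (h t) = h (k2 t)) by (intros; apply C2; auto).
  assert (aI : I01 a) by (unfold I01 in *; lra). assert (rI : I01 r) by (unfold I01 in *; lra).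
  assert (cI : I01 c) by (unfold I01 in *; lra).
  assert (b1I : I01 b1) by (unfold I01 in *; lra). assert (d1I : I01 d1) by (unfold I01 in *; lra).
  assert (hfix : forall t, I01 t -> h t = t -> f0 t = f1 t).
  { intros t Ht E. unfold h in E. rewrite <- E at 2. rewrite (Bij_HHi f1 g1 BF1); auto.
    apply (Bij_map f0 g0 BF0); auto. }
  assert (hgt : forall t, I01 t -> f0 t > f1 t -> h t > t).
  { intros t Ht E. apply (Bij_lt_rev f1 g1 BF1); auto. apply (Bij_map h hi BH); auto.
    unfold h. rewrite (Bij_HiH g1 f1 BG1); auto. apply (Bij_map f0 g0 BF0); auto. }
  assert (hgt' : forall t, I01 t -> h t > t -> f0 t > f1 t).
  { intros t Ht E. assert (f1 t < f1 (h t)) by (apply (Bij_lt f1 g1 BF1); auto; apply (Bij_map h hi BH); auto).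
    unfold h in H. rewrite (Bij_HiH g1 f1 BG1) in H; auto. apply (Bij_map f0 g0 BF0); auto. }
  assert (hr : h r = r).
  { unfold h. rewrite Efr. apply (Bij_HiH f1 g1 BF1); auto. }
  assert (Imin : forall s, a < s < r -> h s <> s).
  { intros s Hs E. assert (r <= s); [|lra]. apply Min; [lra|]. apply hfix; auto. unfold I01; lra. }
  assert (g0a : g0 a = a) by (rewrite <- Fa at 1; apply (Bij_HiH f0 g0 BF0); auto).
  assert (kfix : forall y, I01 y -> k y = y -> f1 (g0 y) = g0 y).
  { intros y Hy E. unfold k in E. rewrite <- E at 2. rewrite (Bij_HiH f0 g0 BF0); auto.
    apply (Bij_map f1 g1 BF1); apply (Bij_map g0 f0 BG0); auto. }
  assert (kfix' : forall y, I01 y -> f1 (g0 y) = g0 y -> k y = y).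
  { intros y Hy E. unfold k. rewrite E. apply (Bij_HHi f0 g0 BF0); auto. }
  assert (k2fix : forall y, I01 y -> k2 y = y -> f1 (g0 (g0 y)) = g0 (g0 y)).
  { intros y Hy E. unfold k2 in E.
    assert (I1 : I01 (g0 y)) by (apply (Bij_map g0 f0 BG0); auto).
    assert (I2 : I01 (g0 (g0 y))) by (apply (Bij_map g0 f0 BG0); auto).
    assert (I3 : I01 (f1 (g0 (g0 y)))) by (apply (Bij_map f1 g1 BF1); auto).
    assert (I4 : I01 (f0 (f1 (g0 (g0 y))))) by (apply (Bij_map f0 g0 BF0); auto).
    rewrite <- E at 2. rewrite (Bij_HiH f0 g0 BF0); auto. rewrite (Bij_HiH f0 g0 BF0); auto. }
  destruct (Req_dec b1 a) as [Eb|Nb].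
  -
    subst b1. set (q := f0 d1).
    assert (qI : I01 q) by (apply (Bij_map f0 g0 BF0); auto).
    assert (aq : a < q) by (rewrite <- Fa; apply (Bij_lt f0 g0 BF0); auto).
    assert (g0q : g0 q = d1) by (apply (Bij_HiH f0 g0 BF0); auto).
    assert (ha : h a = a) by (unfold h; rewrite Fa; rewrite <- Fb at 1; apply (Bij_HiH f1 g1 BF1); auto).
    assert (ka : k a = a) by (apply kfix'; auto; rewrite g0a; auto).
    assert (k2a : k2 a = a) by (unfold k2; rewrite g0a, g0a, Fb, Fa, Fa; auto).
    assert (kmove : forall t, a < t < q -> k t <> t).
    { intros t Ht E. assert (tI : I01 t) by (unfold I01 in *; lra).
      apply (Mv (g0 t)); [|apply kfix; auto]. split.
      - rewrite <- g0a at 1. apply (Bij_lt g0 f0 BG0); auto; lra.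
      - rewrite <- g0q. apply (Bij_lt g0 f0 BG0); auto; lra. }
    destruct (Rtotal_order q r) as [Hqr|[Hqr|Hqr]].
    + assert (hq : h q <> q) by (apply Imin; lra).
      assert (kq : k q = q) by (apply kfix'; auto; rewrite g0q; auto).
      destruct (Rtotal_order (h q) q) as [h1|[h1|h1]]; [|contradiction|].
      * apply (kmove (h q)).
        { split; auto. rewrite <- ha. apply (Bij_lt h hi BH); auto. }
        apply (cf1 h hi k ki); auto.
      * set (z := hi q). assert (zI : I01 z) by (apply (Bij_imap h hi BH); auto).
        assert (hz : h z = q) by (apply (Bij_HHi h hi BH); auto).
        apply (kmove z).
        { split.
          - apply (Bij_lt_rev h hi BH); auto. lra.
          - apply (Bij_lt_rev h hi BH); auto. lra. }
        apply (cf2 h hi k ki); auto.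
    + assert (k2r : k2 r = r) by (apply (fix_r h hi k2 k2i a r); auto; lra).
      apply k2fix in k2r; auto. rewrite <- Hqr in k2r. rewrite g0q in k2r.
      assert (d1c : d1 < c).
      { destruct (Req_dec d1 c); [|lra]. exfalso. unfold q in Hqr. rewrite H, Fc in Hqr. lra. }
      apply (Mv (g0 d1)); auto. split.
      * rewrite <- g0a at 1. apply (Bij_lt g0 f0 BG0); auto.
      * rewrite <- g0q at 2. apply (Bij_lt g0 f0 BG0); auto. apply Up. lra.
    + assert (kr : k r = r) by (apply (fix_r h hi k ki a r); auto; lra).
      apply (kmove r); auto. lra.
  -
    assert (ab : a < b1) by lra.
    assert (bc : b1 < c) by lra.
    set (s0 := g0 b1).
    assert (fb : b1 < f0 b1) by (apply Up; lra).
    assert (s0b : s0 < b1).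
    { unfold s0. rewrite <- (Bij_HiH f0 g0 BF0 b1) at 2; auto.
      apply (Bij_lt g0 f0 BG0); auto. apply (Bij_map f0 g0 BF0); auto. }
    assert (as0 : a < s0) by (unfold s0; rewrite <- g0a; apply (Bij_lt g0 f0 BG0); auto).
    assert (s0I : I01 s0) by (unfold I01 in *; lra).
    assert (hs0 : h s0 = b1).
    { unfold h, s0. rewrite (Bij_HHi f0 g0 BF0); auto. rewrite <- Fb at 1. apply (Bij_HiH f1 g1 BF1); auto. }
    assert (Hpos : forall t, a < t < r -> h t > t).
    { intros t Ht. assert (tI : I01 t) by (unfold I01 in *; lra). apply hgt; auto.
      assert (S0 : f0 s0 - f1 s0 > 0) by (apply Rgt_minus; apply hgt'; auto; lra).
      pose proof G0 as (_&_&_&_&W0). pose proof G1 as (_&_&_&_&W1).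
      pose proof (WC_cont f0 W0) as Cf0. pose proof (WC_cont f1 W1) as Cf1.
      set (F := fun x => f0 (clamp x) - f1 (clamp x)).
      assert (CF : continuity F) by (apply continuity_minus; auto).
      assert (FE : forall x, I01 x -> F x = f0 x - f1 x) by (intros; unfold F; rewrite clamp_id; auto).
      destruct (Rtotal_order (f0 t - f1 t) 0) as [N|[N|N]]; [|exfalso; apply (Imin t Ht); apply (Bij_inj f1 g1 BF1); auto; [apply (Bij_map h hi BH); auto| unfold h; rewrite (Bij_HiH g1 f1 BG1); [lra| apply (Bij_map f0 g0 BF0); auto]]|lra].
      exfalso.
      destruct (Rtotal_order t s0) as [T|[T|T]]; [|rewrite T in N; lra|].
      - destruct (IVT F t s0 CF T) as [z [Hz Ez]]; [rewrite FE; auto| rewrite FE; auto|].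
        assert (zI : I01 z) by (unfold I01 in *; lra). rewrite FE in Ez; auto.
        assert (z <> t) by (intro HH; rewrite HH in Ez; lra). assert (z <> s0) by (intro HH; rewrite HH in Ez; lra).
        apply (Imin z); [lra|]. apply (Bij_inj f1 g1 BF1); auto. apply (Bij_map h hi BH); auto.
        unfold h; rewrite (Bij_HiH g1 f1 BG1); [lra| apply (Bij_map f0 g0 BF0); auto].
      - destruct (IVT (fun x => - F x) s0 t) as [z [Hz Ez]]; auto.
        { apply continuity_opp; auto. }
        { rewrite FE; auto; lra. }
        { rewrite FE; auto; lra. }
        assert (zI : I01 z) by (unfold I01 in *; lra). rewrite FE in Ez; auto.
        assert (z <> t) by (intro HH; rewrite HH in Ez; lra). assert (z <> s0) by (intro HH; rewrite HH in Ez; lra).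
        apply (Imin z); [lra|]. apply (Bij_inj f1 g1 BF1); auto. apply (Bij_map h hi BH); auto.
        unfold h; rewrite (Bij_HiH g1 f1 BG1); [lra| apply (Bij_map f0 g0 BF0); auto]. }
    destruct (Req_dec (f1 a) a) as [F1a|F1a].
    + assert (FL : forall x, a <= x <= b1 -> f1 x = x).
      { intros x Hx. destruct (Req_dec x a) as [->|]; auto. destruct (Req_dec x b1) as [->|]; auto.
        destruct (Req_dec (f1 x) x) as [|Nx]; auto. exfalso.
        destruct (OC f1 g1 G1 x ltac:(lra) Nx) as [b [d [Obd Hbx]]].
        pose proof Obd as (_&_&_&Fb'&Fd'&Mv').
        assert (db : d <= b1). { destruct (Rle_dec d b1); auto. exfalso. apply (Mv' b1); [lra|auto]. }
        destruct (Rle_dec a b) as [Hab'|Hab'].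
        - pose proof (Left b d Obd Hab' ltac:(lra)). lra.
        - apply (Mv' a); [lra|auto]. }
      set (B := f0 b1) in *. set (q := f0 d1).
      assert (BI : I01 B) by (apply (Bij_map f0 g0 BF0); auto).
      assert (qI : I01 q) by (apply (Bij_map f0 g0 BF0); auto).
      assert (Bq : B < q) by (apply (Bij_lt f0 g0 BF0); auto).
      assert (aB : a < B) by lra.
      assert (g0B : g0 B = b1) by (apply (Bij_HiH f0 g0 BF0); auto).
      assert (g0q : g0 q = d1) by (apply (Bij_HiH f0 g0 BF0); auto).
      assert (kfixB : forall y, a <= y <= B -> k y = y).
      { intros y Hy. assert (yI : I01 y) by (unfold I01 in *; lra). apply kfix'; auto. apply FL. split.
        - rewrite <- g0a. apply (Bij_le g0 f0 BG0); auto; lra.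
        - rewrite <- g0B. apply (Bij_le g0 f0 BG0); auto; lra. }
      assert (kmove' : forall t, B < t < q -> k t <> t).
      { intros t Ht E. assert (tI : I01 t) by (unfold I01 in *; lra).
        apply (Mv (g0 t)); [|apply kfix; auto]. split.
        - rewrite <- g0B. apply (Bij_lt g0 f0 BG0); auto; lra.
        - rewrite <- g0q. apply (Bij_lt g0 f0 BG0); auto; lra. }
      assert (hB : h B > B) by (apply Hpos; lra).
      assert (khB : k (h B) = h B) by (apply (cf1 h hi k ki); auto; apply kfixB; lra).
      assert (hBq : q <= h B).
      { destruct (Rle_dec q (h B)); auto. exfalso. apply (kmove' (h B)); auto. lra. }
      set (z := (B + q) / 2). assert (Bz : B < z < q) by (unfold z; lra).
      assert (zI : I01 z) by (unfold I01 in *; lra).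
      set (x := hi z). assert (xI : I01 x) by (apply (Bij_imap h hi BH); auto).
      assert (hx : h x = z) by (apply (Bij_HHi h hi BH); auto).
      assert (ha : h a = a) by (unfold h; rewrite Fa; rewrite <- F1a at 1; apply (Bij_HiH f1 g1 BF1); auto).
      assert (ax : a < x) by (apply (Bij_lt_rev h hi BH); auto; lra).
      assert (xB : x < B) by (apply (Bij_lt_rev h hi BH); auto; lra).
      apply (kmove' z); [lra|].
      rewrite <- hx. apply (cf1 h hi k ki); auto. apply kfixB; lra.
    + assert (a0 : 0 < a).
      { destruct (Req_dec a 0) as [Ea|]; [|lra]. exfalso. apply F1a. rewrite Ea. pose proof G1 as (F10&_). auto. }
      destruct (OC f1 g1 G1 a ltac:(lra) F1a) as [u [v [Ouv Hauv]]].
      pose proof Ouv as (_&_&_&Fu&Fv&Mv').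
      assert (vb : v <= b1). { destruct (Rle_dec v b1); auto. exfalso. apply (Mv' b1); [lra|auto]. }
      assert (vI : I01 v) by (unfold I01 in *; lra).
      set (y := f0 v).
      assert (yI : I01 y) by (apply (Bij_map f0 g0 BF0); auto).
      assert (vy : v < y) by (apply Up; lra).
      assert (yB : y <= f0 b1) by (apply (Bij_le f0 g0 BF0); auto).
      assert (g0y : g0 y = v) by (apply (Bij_HiH f0 g0 BF0); auto).
      assert (ky : k y = y) by (apply kfix'; auto; rewrite g0y; auto).
      assert (hy : h y > y) by (apply Hpos; lra).
      set (z := hi y). assert (zI : I01 z) by (apply (Bij_imap h hi BH); auto).
      assert (hz : h z = y) by (apply (Bij_HHi h hi BH); auto).
      assert (zy : z < y) by (apply (Bij_lt_rev h hi BH); auto; lra).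
      assert (kz : k z = z) by (apply (cf2 h hi k ki); auto).
      assert (za : z < a).
      { destruct (Rlt_dec z a); auto. exfalso. apply (Mv' (g0 z)); [|apply kfix; auto]. split.
        - assert (a <= g0 z) by (rewrite <- g0a; apply (Bij_le g0 f0 BG0); auto; lra). lra.
        - rewrite <- g0y. apply (Bij_lt g0 f0 BG0); auto. }
      assert (ya : y < h a) by (rewrite <- hz; apply (Bij_lt h hi BH); auto).
      assert (fy : f1 y < a).
      { unfold h in ya. rewrite Fa in ya. rewrite <- (Bij_HHi f1 g1 BF1 a aI).
        apply (Bij_lt f1 g1 BF1); auto. apply (Bij_map g1 f1 BG1); auto. }
      assert (f1 v < f1 y) by (apply (Bij_lt f1 g1 BF1); auto). lra.
Qed.

Theorem lemma2p10 (f0 g0 f1 g1 : R -> R) :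
  PL0 f0 -> PL0 f1 -> inverse_on_I f0 g0 -> inverse_on_I f1 g1 ->
  standard_F_copy f0 g0 f1 g1 ->
  forall a c : R, orbital f0 a c ->
  (up_bump f0 a c ->
   forall b1 d1 r : R,
     orbital f1 b1 d1 -> a <= b1 -> d1 <= c ->
     (forall b d, orbital f1 b d -> a <= b -> d <= c -> b1 <= b) ->
     a < r < c -> f0 r = f1 r ->
     (forall s, a < s < c -> f0 s = f1 s -> r <= s) ->
     f0 b1 >= r) /\
  (down_bump f0 a c ->
   forall bn dn r : R,
     orbital f1 bn dn -> a <= bn -> dn <= c ->
     (forall b d, orbital f1 b d -> a <= b -> d <= c -> d <= dn) ->
     a < r < c -> f0 r = f1 r ->
     (forall s, a < s < c -> f0 s = f1 s -> s <= r) ->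
     f0 dn <= r).
Proof.
  intros P0 P1 I0 I1 SF a c Oac.
  assert (G0 : Good f0 g0).
  { pose proof P0 as (A&B&M&_). split; [|split;[|split;[|split]]]; auto. apply PL0_WC; auto. }
  assert (G1 : Good f1 g1).
  { pose proof P1 as (A&B&M&_). split; [|split;[|split;[|split]]]; auto. apply PL0_WC; auto. }
  assert (C1 : forall t, I01 t -> f0 (f1 (g0 (g1 (f0 t)))) = g1 (f0 (f0 (f1 (g0 t))))).
  { intros t Ht. pose proof (proj1 (SF _ _) F_rel1 t Ht) as E. simpl in E. symmetry; exact E. }
  assert (C2 : forall t, I01 t -> f0 (f0 (f1 (g0 (g0 (g1 (f0 t)))))) = g1 (f0 (f0 (f0 (f1 (g0 (g0 t))))))).
  { intros t Ht. pose proof (proj1 (SF _ _) F_rel2 t Ht) as E. simpl in E. symmetry; exact E. }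
  split.
  - intros [_ Up]. intros b1 d1 r O1 H1 H2 L Hr E M.
    apply (core_up f0 g0 f1 g1 G0 G1 C1 C2 a c Oac Up b1 d1 r O1 H1 H2 L Hr E M).
  - intros [_ Dn]. intros bn dn r O1 H1 H2 L Hr E M.
    assert (Hm := core_up (mir f0) (mir g0) (mir f1) (mir g1) (Good_mir _ _ G0) (Good_mir _ _ G1)).
    assert (E1 : mir f0 (1 - dn) >= 1 - r); [|unfold mir in E1; rewrite Rm11 in E1; lra].
    refine (Hm _ _ (1 - c) (1 - a) (orb_mir _ _ _ Oac) _ (1 - dn) (1 - bn) (1 - r) (orb_mir _ _ _ O1) _ _ _ _ _ _).
    + intros t Ht. unfold mir. rewrite !Rm11. rewrite C1; [reflexivity|unfold I01 in *; lra].
    + intros t Ht. unfold mir. rewrite !Rm11. rewrite C2; [reflexivity|unfold I01 in *; lra].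
    + intros x Hx. unfold mir. pose proof (Dn (1 - x) ltac:(lra)). lra.
    + lra.
    + lra.
    + intros b d Obd Hb Hd. apply orb_mir_inv in Obd. pose proof (L _ _ Obd ltac:(lra) ltac:(lra)). lra.
    + lra.
    + unfold mir. rewrite !Rm11, E. reflexivity.
    + intros s Hs Es. unfold mir in Es. pose proof (M (1 - s) ltac:(lra) ltac:(lra)). lra.
Qed.
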